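(* Let $\mathbb{A}$ be a finite subset of a Euclidean space $\mathbb{R}^n$, and let $\mathbb{A}^{\mathcal B}$ be the set of minimal combinations of $\mathbb{A}$. If $\beta \in \mathbb{A}^{\mathcal B}$ and $\beta \notin \mathbb{A}$, then there exists an affinely independent subset $S \subset \mathbb{A}$ with $\sharp(S) \geq 2$ such that $\beta$ is the nearest point from the origin $0$ to the convex polytope $\mathcal{C}(S)$ generated by $S$, and $\beta$ lies in the relative interior of $\mathcal{C}(S)$.
   Context: For a finite nonempty set $S \subset \mathbb{R}^n$, $\mathcal{C}(S)$ denotes its convex hull, and $\tau(S)$ denotes the unique point of $\mathcal{C}(S)$ of minimal Euclidean norm (the nearest point of $\mathcal{C}(S)$ to the origin). The set of minimal combinations of a finite set $\mathbb{A}$ is $\mathbb{A}^{\mathcal B} = \{\tau(S) : S \subset \mathbb{A},\ S \neq \varnothing\}$. $\sharp(S)$ denotes the cardinality of $S$. For an affinely independent set $S = \{x_1,\dots,x_s\}$, the relative interior of $\mathcal{C}(S)$ is $\{\sum_{i=1}^s \lambda_i x_i : \sum_i \lambda_i = 1,\ \lambda_1,\dots,\lambda_s > 0\}$. *)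

(* Defs.v *)
From HB Require Import structures.
From mathcomp Require Import all_boot all_order all_algebra.
From mathcomp Require Import finmap.
Set Implicit Arguments. Unset Strict Implicit. Unset Printing Implicit Defensive.
Import Order.TTheory GRing.Theory Num.Theory.
Local Open Scope ring_scope.
Local Open Scope fset_scope.

Section Defs.
Variables (R : rcfType) (n : nat).
Notation V := 'rV[R]_n.

Definition enorm (x : V) : R := Num.sqrt (\sum_(i < n) x ord0 i ^+ 2).

Definition in_conv (S : {fset V}) (x : V) : Prop :=
  exists w : V -> R, (forall y, y \in S -> 0 <= w y) /\
    \sum_(y <- S) w y = 1 /\ x = \sum_(y <- S) w y *: y.

Definition is_tau (S : {fset V}) (b : V) : Prop :=
  in_conv S b /\ forall y, in_conv S y -> enorm b <= enorm y.

Definition minimal_combination (A : {fset V}) (b : V) : Prop :=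
  exists S : {fset V}, [/\ S `<=` A, S != fset0 & is_tau S b].

Definition affinely_independent (S : {fset V}) : Prop :=
  forall w : V -> R, \sum_(y <- S) w y = 0 -> \sum_(y <- S) w y *: y = 0 ->
    forall y, y \in S -> w y = 0.

Definition in_relint (S : {fset V}) (x : V) : Prop :=
  exists w : V -> R, (forall y, y \in S -> 0 < w y) /\
    \sum_(y <- S) w y = 1 /\ x = \sum_(y <- S) w y *: y.
End Defs.

(* Main.v *)
Require Import Defs.
From HB Require Import structures.
From mathcomp Require Import all_boot all_order all_algebra.
From mathcomp Require Import finmap.
From mathcomp Require Import ring lra.
From Stdlib Require Import Classical.
Import Order.TTheory GRing.Theory Num.Theory.
Local Open Scope ring_scope.
Local Open Scope fset_scope.

Section Aux.
Variables (R : rcfType) (n : nat).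
Notation V := 'rV[R]_n.

Lemma seq_argmin (f : V -> R) (s : seq V) : s != [::] ->
  exists2 y, y \in s & forall z, z \in s -> f y <= f z.
Proof.
elim: s => // x s IH _.
case: (eqVneq s [::]) => [->|sn].
  by exists x; rewrite ?inE // => z; rewrite inE => /eqP ->.
have [y ys Hy] := IH sn.
have [hxy|hyx] := leP (f x) (f y).
  exists x; first by rewrite inE eqxx.
  move=> z; rewrite inE => /orP[/eqP ->//|zs].
  exact: le_trans hxy (Hy z zs).
exists y; first by rewrite inE ys orbT.
move=> z; rewrite inE => /orP[/eqP ->|zs]; last exact: Hy.
exact: ltW.
Qed.

Lemma conv_sub (T S : {fset V}) y : T `<=` S -> in_conv T y -> in_conv S y.
Proof.
move=> sub [w [w0 [w1 wy]]].
exists (fun z => if z \in T then w z else 0); split; [|split].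
- by move=> z _; case: ifP => // /w0.
- rewrite -(big_fset_incl _ sub); last by move=> x _ /negbTE ->.
  by rewrite -w1 big_seq [RHS]big_seq; apply: eq_bigr => z ->.
- rewrite -(big_fset_incl _ sub); last by move=> x _ /negbTE ->; rewrite scale0r.
  by rewrite wy big_seq [RHS]big_seq; apply: eq_bigr => z ->.
Qed.

Lemma conv_D1 (T : {fset V}) (w : V -> R) b y : y \in T -> w y = 0 ->
  (forall z, z \in T -> 0 <= w z) -> \sum_(z <- T) w z = 1 ->
  b = \sum_(z <- T) w z *: z -> in_conv (T `\ y) b.
Proof.
move=> yT wy0 w0 w1 wb; exists w; split; [|split].
- by move=> z /fsetD1P [_ /w0].
- by rewrite -w1 (big_fsetD1 _ yT) /= wy0 add0r.
- by rewrite wb (big_fsetD1 _ yT) /= wy0 scale0r add0r.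
Qed.

Lemma reduce (b : V) k (T : {fset V}) : (#|` T| <= k)%N -> in_conv T b ->
  exists T', [/\ T' `<=` T, affinely_independent T' & in_relint T' b].
Proof.
elim: k T => [|k IH] T.
  rewrite leqn0 => /eqP /cardfs0_eq -> [w [_ [w1 _]]].
  by move: w1; rewrite big_seq_fset0 => /esym/eqP; rewrite oner_eq0.
move=> Tk [w [w0 [w1 wb]]].
have cardD y : y \in T -> (#|` T `\ y| <= k)%N.
  by move=> yT; move: Tk; rewrite (cardfsD1 y) yT.
have recur y : y \in T -> in_conv (T `\ y) b ->
    exists T', [/\ T' `<=` T, affinely_independent T' & in_relint T' b].
  move=> yT hc; have [T' [s1 s2 s3]] := IH _ (cardD _ yT) hc.
  by exists T'; split => //; apply: fsubset_trans s1 (fsubD1set _ _).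
case: (classic (exists y, y \in T /\ w y = 0)) => [[y [yT wy]]|Hpos].
  by apply: (recur y yT); apply: conv_D1 wy w0 w1 wb.
have wpos z : z \in T -> 0 < w z.
  move=> zT; rewrite lt_neqAle w0 // andbT eq_sym; apply/eqP => hz.
  by apply: Hpos; exists z.
case: (classic (exists w' : V -> R, [/\ \sum_(z <- T) w' z = 0,
   \sum_(z <- T) w' z *: z = 0 & exists2 y, y \in T & w' y != 0]))
  => [[w' [h1 h2 [y yT wy]]]|Hno]; last first.
  exists T; split => //; last by exists w.
  move=> w' h1 h2 y yT; apply/eqP/negPn/negP => hy.
  by apply: Hno; exists w'; split => //; exists y.
have [v [v0 v1 vy]] : exists v : V -> R, [/\ \sum_(z <- T) v z = 0,
    \sum_(z <- T) v z *: z = 0 & 0 < v y].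
  have [hp|hl] := ltP 0 (w' y); first by exists w'.
  exists (fun z => - w' z); split.
  - by rewrite sumrN h1 oppr0.
  - by under eq_bigr do rewrite scaleNr; rewrite sumrN h2 oppr0.
  - by rewrite oppr_gt0 lt_neqAle wy.
have sn : [seq z <- T | 0 < v z] != [::].
  apply/eqP => he; have : y \in [seq z <- T | 0 < v z] by rewrite mem_filter vy yT.
  by rewrite he.
have [y0 y0s Hmin] := @seq_argmin (fun z => w z / v z) _ sn.
move: y0s; rewrite mem_filter => /andP [vy0 y0T].
set t := w y0 / v y0.
have t0 : 0 <= t by rewrite /t divr_ge0 // ltW // wpos.
apply: (recur y0 y0T).
apply: (@conv_D1 _ (fun z => w z - t * v z)) => //.
- by rewrite /t divfK ?subrr // gt_eqF.
- move=> z zT; have [hv|hv] := ltP 0 (v z).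
    have := Hmin z; rewrite mem_filter hv zT => /(_ isT).
    rewrite -/t ler_pdivlMr // => h; lra.
  have := wpos z zT; nra.
- by rewrite sumrB -mulr_sumr v0 mulr0 subr0.
- under eq_bigr do rewrite scalerBl -scalerA.
  by rewrite sumrB -scaler_sumr v1 scaler0 subr0.
Qed.

End Aux.

Theorem theorem1 (R : rcfType) (n : nat) (A : {fset 'rV[R]_n}) (b : 'rV[R]_n) :
  minimal_combination A b -> b \notin A ->
  exists S : {fset 'rV[R]_n},
    [/\ S `<=` A, (2 <= #|` S|)%N, affinely_independent S,
        is_tau S b & in_relint S b].
Proof.
move=> [S0 [S0A _ [cS0 mS0]]] bA.
have [T [TS Tai Tri]] := @reduce R n b _ S0 (leqnn _) cS0.
have TA := fsubset_trans TS S0A.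
have Tc : in_conv T b.
  by case: Tri => w [w0 [w1 wb]]; exists w; split => // z /w0 /ltW.
exists T; split => //.
- case: Tri => w [w0 [w1 wb]].
  rewrite leqNgt; apply/negP => h.
  case E: #|` T| h => [|[|m]] // _.
    move: w1; rewrite (cardfs0_eq E) big_seq_fset0 => /esym/eqP.
    by rewrite oner_eq0.
  have /cardfs1P [a Ta] : #|` T| == 1%N by rewrite E.
  move: w1 wb; rewrite Ta !big_seq_fset1 => -> ; rewrite scale1r => ba.
  by move: bA; rewrite ba (fsubsetP TA) // Ta fset11.
- split => // y /(@conv_sub R n _ _ _ TS); exact: mS0.
Qed.
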